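(* Let $G$ be a bipartite permutation graph with a transitive vertex ordering $<$. Let $M=\{e_1,e_2,\ldots,e_t\}$ be a matching in $G$ where $l(e_1)<l(e_2)<\cdots<l(e_t)$. Then $M$ is uniquely restricted if and only if $\{e_i,e_{i+1}\}$ is a uniquely restricted matching in $G$ for each $i\in\{1,2,\ldots,t-1\}$.
   Context: Graphs are finite, simple, undirected. A permutation graph is a graph isomorphic to some $G_\pi$, where for a permutation $\pi$ of $\{1,\dots,n\}$, $G_\pi$ has vertex set $\{1,\dots,n\}$ and edges $ij$ with $(i-j)(\pi(i)-\pi(j))<0$; a bipartite permutation graph is a permutation graph that is bipartite. An ordering $<$ of $V(G)$ is a transitive vertex ordering if for all $u<v<w$: (a) $uv,vw\in E(G)$ implies $uw\in E(G)$, and (b) $uw\in E(G)$ implies $uv\in E(G)$ or $vw\in E(G)$. For an edge $e=uv$, $l(e)=\min_<\{u,v\}$ and $r(e)=\max_<\{u,v\}$. A matching is a set of pairwise vertex-disjoint edges; it is uniquely restricted if no other matching of $G$ matches exactly the same vertex set. *)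

(* Defs.v *)
From mathcomp Require Import all_boot all_order all_algebra all_fingroup.
Set Implicit Arguments. Unset Strict Implicit. Unset Printing Implicit Defensive.
Import GRing.Theory Num.Theory.

Definition simple_graph (T : finType) (adj : rel T) : Prop :=
  symmetric adj /\ irreflexive adj.

Definition perm_graph_adj (n : nat) (pi : 'S_n) (i j : 'I_n) : bool :=
  (((i : nat)%:Z - (j : nat)%:Z) * (((pi i : nat)%:Z) - ((pi j : nat)%:Z)) < 0)%R.

Definition permutation_graph (T : finType) (adj : rel T) : Prop :=
  exists (n : nat) (pi : 'S_n) (f : T -> 'I_n),
    bijective f /\ forall x y, adj x y = perm_graph_adj pi (f x) (f y).

Definition bipartite (T : finType) (adj : rel T) : Prop :=
  exists c : T -> bool, forall x y, adj x y -> c x != c y.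

Definition bipartite_permutation_graph (T : finType) (adj : rel T) : Prop :=
  permutation_graph adj /\ bipartite adj.

(* A linear ordering of V(G) is given by an injective rank : T -> nat;
   u < v iff rank u < rank v. *)
Definition transitive_vertex_ordering (T : finType) (adj : rel T) (rank : T -> nat) : Prop :=
  injective rank /\
  forall u v w, rank u < rank v -> rank v < rank w ->
    (adj u v -> adj v w -> adj u w) /\ (adj u w -> adj u v || adj v w).

Definition is_edge (T : finType) (adj : rel T) (e : {set T}) : Prop :=
  exists u v, adj u v /\ e = [set u; v].

Definition is_matching (T : finType) (adj : rel T) (M : {set {set T}}) : Prop :=
  (forall e, e \in M -> is_edge adj e) /\ trivIset M.

Definition uniquely_restricted (T : finType) (adj : rel T) (M : {set {set T}}) : Prop :=
  is_matching adj M /\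
  forall M', is_matching adj M' -> cover M' = cover M -> M' = M.

(* The edge set listed by a sequence of ordered pairs (l(e), r(e)). *)
Definition edges_of (T : finType) (s : seq (T * T)) : {set {set T}} :=
  [set [set p.1; p.2] | p in s].

(* Main.v *)
Require Import Defs.
From mathcomp Require Import all_boot all_order all_algebra all_fingroup.
From mathcomp Require Import zify.
Set Implicit Arguments. Unset Strict Implicit. Unset Printing Implicit Defensive.

Definition good (T : finType) (adj : rel T) (rank : T -> nat) : Prop :=
  [/\ symmetric adj, irreflexive adj,
      (forall x y z, adj x y -> adj y z -> adj x z -> False),
      injective rank &
      (forall u v w, rank u < rank v -> rank v < rank w ->
         (adj u v -> adj v w -> adj u w) /\ (adj u w -> adj u v || adj v w))].

Lemma good_of (T : finType) (adj : rel T) (rank : T -> nat) :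
  simple_graph adj -> bipartite_permutation_graph adj ->
  transitive_vertex_ordering adj rank -> good adj rank.
Proof.
move=> [sy ir] [_ [c hc]] [inj tv]; split=> //.
move=> x y z /hc a /hc b /hc e; move: a b e.
by case: (c x); case: (c y); case: (c z).
Qed.


Lemma noV (T : finType) (adj : rel T) (rank : T -> nat) u v w :
  good adj rank -> rank u < rank v -> rank v < rank w -> adj u v -> adj v w -> False.
Proof.
move=> [sy ir tri inj tv] h1 h2 a b.
have [h _] := tv _ _ _ h1 h2; exact: (tri _ _ _ a b (h a b)).
Qed.

Lemma rtype (T : finType) (adj : rel T) (rank : T -> nat) v w u :
  good adj rank -> adj v w -> rank v < rank w -> adj v u -> rank v < rank u.
Proof.
move=> G a h b; have G' := G; case: G' => sy ir tri inj tv.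
case: (ltngtP (rank v) (rank u)) => // h'.
  by case: (noV G h' h); rewrite // sy.
by move/inj: h' => e; rewrite e ir in b.
Qed.

Lemma ltype (T : finType) (adj : rel T) (rank : T -> nat) v w u :
  good adj rank -> adj w v -> rank w < rank v -> adj u v -> rank u < rank v.
Proof.
move=> G a h b; have G' := G; case: G' => sy ir tri inj tv.
case: (ltngtP (rank u) (rank v)) => // h'.
  by case: (noV G h h'); rewrite // sy.
by move/inj: h' => e; rewrite e ir in b.
Qed.

Lemma L1 (T : finType) (adj : rel T) (rank : T -> nat) a v b w :
  good adj rank -> rank a < rank v -> rank v < rank b -> adj a b ->
  adj v w -> rank v < rank w -> adj v b.
Proof.
move=> G h1 h2 ab vw h3; have G' := G; case: G' => sy ir tri inj tv.
have [_ h] := tv _ _ _ h1 h2; case/orP: (h ab) => // av.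
by case: (noV G h1 h3 av vw).
Qed.

Lemma L2 (T : finType) (adj : rel T) (rank : T -> nat) a v b w :
  good adj rank -> rank a < rank v -> rank v < rank b -> adj a b ->
  adj w v -> rank w < rank v -> adj a v.
Proof.
move=> G h1 h2 ab wv h3; have G' := G; case: G' => sy ir tri inj tv.
have [_ h] := tv _ _ _ h1 h2; case/orP: (h ab) => // vb.
by case: (noV G h3 h2 wv vb).
Qed.

Definition lv (T : finType) (d : T * T) (s : seq (T * T)) k := (nth d s k).1.
Definition rv (T : finType) (d : T * T) (s : seq (T * T)) k := (nth d s k).2.

Definition sgood (T : finType) (adj : rel T) (rank : T -> nat) d s : Prop :=
  [/\ (forall k, k < size s -> adj (lv d s k) (rv d s k) /\ rank (lv d s k) < rank (rv d s k)),
      (forall p q, p < q -> q < size s -> rank (lv d s p) < rank (lv d s q)) &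
      (forall p q, p < size s -> q < size s -> p != q ->
         [disjoint [set lv d s p; rv d s p] & [set lv d s q; rv d s q]])].

Lemma distinct (T : finType) (adj : rel T) (rank : T -> nat) d s p q :
  sgood adj rank d s -> p < size s -> q < size s -> p != q ->
  [/\ lv d s p != lv d s q, lv d s p != rv d s q, rv d s p != rv d s q & rv d s p != lv d s q].
Proof.
move=> [_ _ dj] hp hq pq; have D := dj _ _ hp hq pq.
have F : forall x, x \in [set lv d s p; rv d s p] -> x \in [set lv d s q; rv d s q] -> False.
  by move=> x h1 h2; rewrite (disjointFr D h1) in h2.
split; apply/eqP => e.
- by apply: (F (lv d s p)); rewrite !inE ?e eqxx ?orbT.
- by apply: (F (lv d s p)); rewrite !inE ?e eqxx ?orbT.
- by apply: (F (rv d s p)); rewrite !inE ?e eqxx ?orbT.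
- by apply: (F (rv d s p)); rewrite !inE ?e eqxx ?orbT.
Qed.

Definition cross (T : finType) (adj : rel T) d s a b :=
  adj (lv d s a) (rv d s b) && adj (lv d s b) (rv d s a).

Lemma claim1 (T : finType) (adj : rel T) (rank : T -> nat) d s :
  good adj rank -> sgood adj rank d s ->
  forall n i j, j - i <= n -> i < j -> j < size s -> cross adj d s i j ->
  exists a, a.+1 < size s /\ cross adj d s a a.+1.
Proof.
move=> G S; have G' := G; have S' := S; case: G' => sy ir tri inj tv; case: S' => se sl sd.
elim=> [|n IH] i j hn hij hj.
  by move=> _; exfalso; lia.
move=> /andP [c1 c2].
case: (ltngtP i.+1 j) => [hk||hk]; last 2 first.
- lia.
- by exists i; rewrite hk /cross c1 c2.
set k := i.+1.
have [lik rk] : rank (lv d s i) < rank (lv d s k) /\ k < size s by split; [apply: sl|]; lia.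
have lkj := sl k j hk hj.
have [aj rj] := se _ hj; have [ak rkk] := se _ rk; have [ai ri] := se i (ltn_trans hij hj).
have ljri := rtype G aj rj c2.
have akri : adj (lv d s k) (rv d s i) by apply: (L1 G lik _ ai ak rkk); lia.
have akrj : adj (lv d s k) (rv d s j) by apply: (L1 G lik _ c1 ak rkk); lia.
case: (ltnP (rank (rv d s k)) (rank (rv d s j))) => hr.
  have : adj (lv d s i) (rv d s k) by apply: (L2 G _ hr c1 ak rkk); lia.
  move=> h; apply: (IH i k) => //; first lia.
  by rewrite /cross h akri.
have : adj (lv d s j) (rv d s k) by apply: (L1 G lkj _ ak aj rj); lia.
move=> h; apply: (IH k j) => //; first lia.
by rewrite /cross h akrj.
Qed.

Lemma claim2 (T : finType) (adj : rel T) (rank : T -> nat) d s i j m :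
  good adj rank -> sgood adj rank d s ->
  i < j -> j < size s -> i < m -> m < size s ->
  adj (lv d s i) (rv d s j) -> adj (lv d s m) (rv d s i) ->
  exists a b, [/\ a < b, b < size s & cross adj d s a b].
Proof.
move=> G S hij hj him hm c1 c2; have S' := S; case: S' => se sl sd.
have [aj rj] := se _ hj; have [am rm] := se _ hm; have [ai ri] := se i (ltn_trans hij hj).
have lmri := rtype G am rm c2.
have lij := sl _ _ hij hj; have lim := sl _ _ him hm.
case: (ltngtP m j) => hmj.
- case: (ltnP (rank (rv d s m)) (rank (rv d s j))) => hr.
    have : adj (lv d s i) (rv d s m) by apply: (L2 G _ hr c1 am rm); lia.
    by move=> h; exists i, m; split => //; rewrite /cross h c2.
  have lmj := sl _ _ hmj hj.
  have h1 : adj (lv d s m) (rv d s j) by apply: (L1 G lim _ c1 am rm); lia.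
  have h2 : adj (lv d s j) (rv d s m) by apply: (L1 G lmj _ am aj rj); lia.
  by exists m, j; split => //; rewrite /cross h1 h2.
- have lmj := sl _ _ hmj hm.
  have h2 : adj (lv d s j) (rv d s i) by apply: (L1 G lij _ ai aj rj); lia.
  by exists i, j; split => //; rewrite /cross c1 h2.
- by subst m; exists i, j; split => //; rewrite /cross c1 c2.
Qed.

Lemma disjI (T : finType) (A B : {set T}) :
  (forall x, x \in A -> x \in B -> False) -> [disjoint A & B].
Proof.
move=> h; rewrite disjoints_subset; apply/subsetP => x xA; rewrite inE.
by apply/negP => xB; exact: h x xA xB.
Qed.

Lemma coverP' (T : finType) (x : T) (P : {set {set T}}) :
  reflect (exists2 B, B \in P & x \in B) (x \in cover P).
Proof. exact: bigcupP. Qed.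

Lemma ur_sub (T : finType) (adj : rel T) (M P : {set {set T}}) :
  uniquely_restricted adj M -> P \subset M -> uniquely_restricted adj P.
Proof.
move=> [[Me Mt] U] /subsetP sub.
have Pm : is_matching adj P by split; [move=> e /sub; exact: Me | apply: trivIsetS Mt; apply/subsetP].
split => // N [Ne Nt] cov.
have dis : forall A, A \in M :\: P -> [disjoint A & cover P].
  move=> A /setDP [AM AP]; apply: disjI => x xA /coverP' [B BP xB].
  have AB : A != B by apply: contraNneq AP => ->.
  have := (trivIsetP Mt) A B AM (sub _ BP) AB.
  by move=> D; rewrite (disjointFr D xA) in xB.
have M'm : is_matching adj ((M :\: P) :|: N).
  split.
    by move=> e /setUP [/setDP [eM _]|eN]; [exact: Me | exact: Ne].
  apply: trivIsetU => //; first exact: trivIsetD.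
  apply: disjI => x /coverP' [A AMP xA]; rewrite cov => xP.
  by rewrite (disjointFr (dis _ AMP) xA) in xP.
have cov' : cover ((M :\: P) :|: N) = cover M.
  apply/setP => x; apply/coverP'/coverP'.
    case=> A /setUP [/setDP [AM _]|AN] xA; first by exists A.
    have : x \in cover N by apply/coverP'; exists A.
    by rewrite cov => /coverP' [B BP xB]; exists B => //; exact: sub.
  case=> A AM xA; case: (boolP (A \in P)) => AP.
    have : x \in cover P by apply/coverP'; exists A.
    by rewrite -cov => /coverP' [B BN xB]; exists B => //; rewrite inE BN orbT.
  by exists A => //; rewrite !inE AP AM.
have E := U _ M'm cov'.
apply/setP => B; apply/idP/idP => hB.
  have : B \in M by rewrite -E inE hB orbT.
  move=> BM; apply/negPn/negP => BP.
  have [u [v [_ eB]]] := Ne _ hB.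
  have uB : u \in B by rewrite eB set21.
  have : u \in cover P by rewrite -cov; apply/coverP'; exists B.
  have BMP : B \in M :\: P by rewrite inE BP BM.
  by move=> uP; rewrite (disjointFr (dis B BMP) uB) in uP.
have : B \in (M :\: P) :|: N by rewrite E; exact: sub.
by case/setUP => // /setDP [_]; rewrite hB.
Qed.

Lemma memE (T : finType) (d : T * T) s e :
  e \in edges_of s -> exists2 k, k < size s & e = [set lv d s k; rv d s k].
Proof.
case/imsetP => p ps ->; exists (index p s); first by rewrite index_mem.
by rewrite /lv /rv nth_index.
Qed.

Lemma memI (T : finType) (d : T * T) s k :
  k < size s -> [set lv d s k; rv d s k] \in edges_of s.
Proof. by move=> hk; apply/imsetP; exists (nth d s k) => //; exact: mem_nth. Qed.

Lemma cover2 (T : finType) (A B : {set T}) : cover [set A; B] = A :|: B.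
Proof.
apply/setP => x; rewrite inE; apply/coverP'/orP.
  by case=> C /set2P [->|->] xC; [left|right].
by case=> xC; [exists A; rewrite ?set21 | exists B; rewrite ?set22].
Qed.

Lemma pairE (T : finType) (d : T * T) s a :
  a.+1 < size s ->
  edges_of [:: nth d s a; nth d s a.+1] =
  [set [set lv d s a; rv d s a]; [set lv d s a.+1; rv d s a.+1]].
Proof.
move=> _; apply/setP => e; apply/imsetP/set2P.
  by case=> p; rewrite !inE => /orP [] /eqP ->; [left|right].
by case=> ->; [exists (nth d s a) | exists (nth d s a.+1)]; rewrite // !inE eqxx ?orbT.
Qed.

Lemma sgood_of (T : finType) (adj : rel T) (rank : T -> nat) d s :
  good adj rank ->
  (forall p, p \in s -> adj p.1 p.2 /\ rank p.1 < rank p.2) ->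
  sorted (fun p q : T * T => rank p.1 < rank q.1) s ->
  is_matching adj (edges_of s) -> sgood adj rank d s.
Proof.
move=> G hs hsort [_ Mt].
have se : forall k, k < size s -> adj (lv d s k) (rv d s k) /\ rank (lv d s k) < rank (rv d s k).
  by move=> k hk; apply: hs; exact: mem_nth.
have tr : transitive (fun p q : T * T => rank p.1 < rank q.1).
  by move=> y x z; apply: ltn_trans.
have sl : forall p q, p < q -> q < size s -> rank (lv d s p) < rank (lv d s q).
  move=> p q pq hq; apply: (sorted_ltn_nth tr d hsort) => //; rewrite inE //.
  exact: ltn_trans pq hq.
split => // p q hp hq pq.
apply: (trivIsetP Mt); try exact: memI.
apply/negP => /eqP e.
have h1 : lv d s p \in [set lv d s q; rv d s q] by rewrite -e set21.
have h2 : lv d s q \in [set lv d s p; rv d s p] by rewrite e set21.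
have [_ rp] := se _ hp; have [_ rq] := se _ hq.
have ne : rank (lv d s p) != rank (lv d s q).
  by case: (ltngtP p q) pq => // h _; [have := sl _ _ h hq | have := sl _ _ h hp]; lia.
case/set2P: h1 => e1; first by rewrite e1 eqxx in ne.
case/set2P: h2 => e2; first by rewrite e2 eqxx in ne.
by move: rp rq; rewrite e1 e2; lia.
Qed.

Lemma partner (T : finType) (adj : rel T) (M : {set {set T}}) v :
  symmetric adj -> (forall e, e \in M -> is_edge adj e) -> v \in cover M ->
  exists f x, [/\ f \in M, f = [set v; x] & adj v x].
Proof.
move=> sy Me /coverP' [f fM vf]; have [u [w [a e]]] := Me _ fM.
move: vf; rewrite e => /set2P [->|->].
  exists f; exists w; split => //.
exists f; exists u; split => //; first by rewrite e setUC.
by rewrite sy.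
Qed.

Lemma not_ur_pair (T : finType) (adj : rel T) (rank : T -> nat) d s a :
  good adj rank -> sgood adj rank d s -> a.+1 < size s -> cross adj d s a a.+1 ->
  ~ uniquely_restricted adj (edges_of [:: nth d s a; nth d s a.+1]).
Proof.
move=> G S ha /andP [c1 c2] [_ U]; have S' := S; case: S' => se sl sd.
have ha' : a < size s by lia.
have aa : a != a.+1 by lia.
have [n1 n2 n3 n4] := distinct S ha' ha aa.
have [_ r1] := se _ ha'; have [_ r2] := se _ ha.
have m1 : lv d s a != rv d s a by apply/eqP => e; rewrite e in r1; lia.
have m2 : lv d s a.+1 != rv d s a.+1 by apply/eqP => e; rewrite e in r2; lia.
set N := [set [set lv d s a; rv d s a.+1]; [set lv d s a.+1; rv d s a]].
have Nm : is_matching adj N.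
  split.
    by move=> e /set2P [->|->]; [exists (lv d s a), (rv d s a.+1) | exists (lv d s a.+1), (rv d s a)].
  apply/trivIsetP => A B /set2P [->|->] /set2P [->|->]; rewrite ?eqxx // => _;
    apply: disjI => x /set2P [->|->] /set2P;
    by case=> e; move: n1 n2 n3 n4 m1 m2; rewrite e ?eqxx.
have cv : cover N = cover (edges_of [:: nth d s a; nth d s a.+1]).
  rewrite pairE // !cover2; apply/setP => x; rewrite !inE.
  by case: (x == lv d s a); case: (x == rv d s a); case: (x == lv d s a.+1); case: (x == rv d s a.+1).
have := U _ Nm cv; rewrite pairE // => E.
have : [set lv d s a; rv d s a.+1] \in N by rewrite set21.
rewrite E => /set2P [] e.
  have : rv d s a.+1 \in [set lv d s a; rv d s a] by rewrite -e set22.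
  by case/set2P => e'; move: n1 n2 n3 n4 m1 m2; rewrite e' ?eqxx.
have : lv d s a \in [set lv d s a.+1; rv d s a.+1] by rewrite -e set21.
by case/set2P => e'; move: n1 n2 n3 n4 m1 m2; rewrite e' ?eqxx.
Qed.

Lemma backward (T : finType) (adj : rel T) (rank : T -> nat) d s :
  good adj rank -> sgood adj rank d s -> is_matching adj (edges_of s) ->
  (forall i, i.+1 < size s -> uniquely_restricted adj (edges_of [:: nth d s i; nth d s i.+1])) ->
  uniquely_restricted adj (edges_of s).
Proof.
move=> G S Mm H; split => // M' [M'e M't] cov.
have G' := G; case: G' => sy ir tri inj tv; have S' := S; case: S' => se sl sd.
case: (eqVneq M' (edges_of s)) => // ne; exfalso.
have ex : exists k, (k < size s) && ([set lv d s k; rv d s k] \notin M').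
  case: (boolP (has (fun k => [set lv d s k; rv d s k] \notin M') (iota 0 (size s)))).
    by case/hasP => k; rewrite mem_iota add0n /= => hk hn; exists k; rewrite hk hn.
  move/hasPn => allin; exfalso; move: ne; apply/negP/negPn.
  have sub : edges_of s \subset M'.
    apply/subsetP => e /(memE d) [k hk ->]; have := allin k; rewrite mem_iota add0n hk /=.
    by move/(_ isT); rewrite negbK.
  rewrite eqEsubset sub andbT; apply/subsetP => f fM'.
  apply/negPn/negP => fM.
  have [u [w [_ ef]]] := M'e _ fM'.
  have : u \in cover M' by apply/coverP'; exists f => //; rewrite ef set21.
  rewrite cov => /coverP' [A AM uA].
  have Af : A != f by apply: contraNneq fM => <-.
  have D := (trivIsetP M't) A f (subsetP sub _ AM) fM' Af.
  have uf : u \in f by rewrite ef set21.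
  by rewrite (disjointFr D uA) in uf.
case: (ex_minnP ex) => i /andP [hi ni] imin.
have inM : forall k, k < i -> [set lv d s k; rv d s k] \in M'.
  move=> k ki; apply/negPn/negP => nk; have := imin k.
  by rewrite nk (ltn_trans ki hi) /= => /(_ isT); lia.
have clash : forall f k y, f \in M' -> k < i -> y \in f -> y \in [set lv d s k; rv d s k] ->
    f = [set lv d s k; rv d s k].
  move=> f k y fM ki yf yk; apply/eqP/negPn/negP => nf.
  have D := (trivIsetP M't) _ _ fM (inM _ ki) nf.
  by rewrite (disjointFr D yf) in yk.
have covM : forall x k, k < size s -> x \in [set lv d s k; rv d s k] -> x \in cover M'.
  by move=> x k hk xk; rewrite cov; apply/coverP'; exists [set lv d s k; rv d s k] => //; exact: memI.
have vert : forall x, x \in cover M' -> exists2 k, k < size s & (x = lv d s k \/ x = rv d s k).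
  move=> x; rewrite cov => /coverP' [A AM xA]; case: (memE d AM) => k hk eA.
  by move: xA; rewrite eA => /set2P xk; exists k.
have [ai ri] := se _ hi.
have [j [hij hj aj]] : exists j, [/\ i < j, j < size s & adj (lv d s i) (rv d s j)].
  have [f [x [fM ef ax]]] := partner sy M'e (covM _ _ hi (set21 _ _)).
  have xc : x \in cover M' by apply/coverP'; exists f => //; rewrite ef set22.
  have [k hk [ek|ek]] := vert x xc; subst x.
    have [ak rk] := se _ hk.
    have h1 := rtype G ai ri ax.
    have h2 : rank (lv d s k) < rank (lv d s i) by apply: (rtype G ak rk); rewrite sy.
    lia.
  case: (ltngtP k i) => hki.
  - have rf : rv d s k \in f by rewrite ef set22.
    have e2 := clash _ _ _ fM hki rf (set22 _ _).
    have : lv d s i \in [set lv d s k; rv d s k].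
      by rewrite -e2 ef set21.
    have kk : k != i by lia.
    have [n1 n2 n3 n4] := distinct S hk hi kk.
    by case/set2P => e'; move: n1 n2 n3 n4; rewrite e' ?eqxx.
  - by exists k.
  - by subst k; rewrite -ef fM in ni.
have [m [him hm am]] : exists m, [/\ i < m, m < size s & adj (lv d s m) (rv d s i)].
  have [f [x [fM ef ax]]] := partner sy M'e (covM _ _ hi (set22 _ _)).
  have xc : x \in cover M' by apply/coverP'; exists f => //; rewrite ef set22.
  have [k hk [ek|ek]] := vert x xc; subst x; last first.
    have [ak rk] := se _ hk.
    have h1 : rank (rv d s k) < rank (rv d s i) by apply: (ltype G ai ri); rewrite sy.
    have h2 := ltype G ak rk ax.
    lia.
  case: (ltngtP k i) => hki.
  - have lf : lv d s k \in f by rewrite ef set22.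
    have e2 := clash _ _ _ fM hki lf (set21 _ _).
    have : rv d s i \in [set lv d s k; rv d s k].
      by rewrite -e2 ef set21.
    have kk : k != i by lia.
    have [n1 n2 n3 n4] := distinct S hk hi kk.
    by case/set2P => e'; move: n1 n2 n3 n4; rewrite e' ?eqxx.
  - by exists k; rewrite sy.
  - by subst k; rewrite setUC -ef fM in ni.
have [a [b [hab hb cab]]] := claim2 G S hij hj him hm aj am.
have [c [hc cc]] := claim1 G S (leqnn _) hab hb cab.
exact: (not_ur_pair G S hc cc (H c hc)).
Qed.

Theorem theorem6 (T : finType) (adj : rel T) (rank : T -> nat)
  (s : seq (T * T)) :
  simple_graph adj ->
  bipartite_permutation_graph adj ->
  transitive_vertex_ordering adj rank ->
  (forall p, p \in s -> adj p.1 p.2 /\ rank p.1 < rank p.2) ->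
  sorted (fun p q : T * T => rank p.1 < rank q.1) s ->
  is_matching adj (edges_of s) ->
  (uniquely_restricted adj (edges_of s) <->
   forall i, i.+1 < size s ->
     forall d : T * T,
     uniquely_restricted adj (edges_of [:: nth d s i; nth d s i.+1])).
Proof.
move=> sg bp tvo hs hsort Mm; have G := good_of sg bp tvo.
split.
  move=> U i hi d; apply: (ur_sub U); apply/subsetP => e /imsetP [p pin ->].
  apply/imsetP; exists p => //; move: pin; rewrite !inE => /orP [] /eqP ->;
    apply: mem_nth; [exact: ltnW hi | exact: hi].
case: s hs hsort Mm => [|p0 s'] hs hsort Mm H.
  split => // M' [M'e _] cov; apply/setP => e.
  apply/idP/idP => [eM|]; last by case/imsetP.
  exfalso; have [u [v [_ ee]]] := M'e _ eM.
  have : u \in cover M' by apply/coverP'; exists e => //; rewrite ee set21.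
  by rewrite cov => /coverP' [A /imsetP [p]].
apply: (backward (d := p0) G (sgood_of p0 G hs hsort Mm) Mm).
by move=> i hi; apply: H.
Qed.
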